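(* Let $(\{0,1\}^{\mathbb N},\mathbb B_\Pi,m,\sigma)$ be an ergodic Markov shift over two symbols, $X$ a lexicographic-like random variable, $d\in\mathbb N$, $O=\bigcup_{n=0}^\infty\sigma^{-n}(\{\overline0\})$ with $\overline0=(0,0,\dots)$, and $\widetilde{\mathcal P}^X(d)=\{P\setminus O\mid P\in\mathcal P^X(d)\}\cup\{O\}$. If $P_i,P_j\in\widetilde{\mathcal P}^X(d)$ and $P_i\subseteq C_{a_0}$ for some $a_0\in\{0,1\}$, then either $P_i\cap\sigma^{-1}(P_j)=C_{a_0}\cap\sigma^{-1}(P_j)$ or $m(P_i\cap\sigma^{-1}(P_j))=0$.
   Context: Markov shift over $\{0,1\}$: given a $2\times2$ stochastic matrix $Q=(q_{ij})$ and a stationary probability vector $p$ with positive entries, the system on one-sided sequences $s=(s_0,s_1,\dots)\in\{0,1\}^{\mathbb N}$ with $\sigma$-algebra $\mathbb B_\Pi$ generated by cylinders $C_{a_0\dots a_{n-1}}=\{s:s_i=a_i,i<n\}$, shift $(\sigma s)_j=s_{j+1}$ and $m(C_{a_0\dots a_{n-1}})=p_{a_0}q_{a_0a_1}\cdots q_{a_{n-2}a_{n-1}}$; ergodic means every $\sigma$-invariant set has measure $0$ or $1$. Lexicographic order: $r\prec s$ iff $r_0<s_0$ or there is $k\in\mathbb N$ with $r_i=s_i$ for $i<k$ and $r_k<s_k$. $X$ is lexicographic-like if it is injective on a set of full $m$-measure and for all $s$ and $j,n\in\mathbb N_0$: $X(\sigma^j s)\le X(\sigma^n s)$ iff $\sigma^j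 s\preceq\sigma^n s$. Ordinal pattern: $(x_0,\dots,x_d)$ has pattern $\pi=(r_0,\dots,r_d)\in\Pi_d$ (permutations of $\{0,\dots,d\}$) if $x_{r_0}\ge\dots\ge x_{r_d}$ and $r_{l-1}>r_l$ whenever $x_{r_{l-1}}=x_{r_l}$. The ordinal partition $\mathcal P^X(d)$ consists of the sets $P_\pi=\{s:(X(\sigma^d s),\dots,X(\sigma s),X(s))\text{ has ordinal pattern }\pi\}$, $\pi\in\Pi_d$. *)

(* Defs.v *)
(* classical reals. Symbols 0,1 are encoded as false,true. *)
From Stdlib Require Import Reals List.
Import ListNotations.
Open Scope R_scope.

Definition seqb := nat -> bool.
Definition set := seqb -> Prop.

Definition shift (s : seqb) : seqb := fun k => s (S k).
Definition shiftn (n : nat) (s : seqb) : seqb := fun k => s (n + k)%nat.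

Definition cyl (a : list bool) : set :=
  fun s => forall i, (i < length a)%nat -> s i = nth i a false.

Definition bv (b : bool) : nat := if b then 1%nat else 0%nat.

Definition markov_params (Q : bool -> bool -> R) (p : bool -> R) : Prop :=
  (forall i j, 0 <= Q i j) /\ (forall i, Q i false + Q i true = 1) /\
  (forall i, 0 < p i) /\ p false + p true = 1 /\
  (forall j, p false * Q false j + p true * Q true j = p j).

Fixpoint trans_prod (Q : bool -> bool -> R) (a0 : bool) (l : list bool) : R :=
  match l with
  | [] => 1
  | a1 :: l' => Q a0 a1 * trans_prod Q a1 l'
  end.

Definition mcyl (Q : bool -> bool -> R) (p : bool -> R) (a : list bool) : R :=
  match a with
  | [] => 1
  | a0 :: l => p a0 * trans_prod Q a0 l
  end.

(* m-null sets: outer measure (Caratheodory extension from cylinders) is 0 *)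
Definition null (Q : bool -> bool -> R) (p : bool -> R) (A : set) : Prop :=
  forall eps, 0 < eps ->
    exists c : nat -> list bool,
      (forall s, A s -> exists n, cyl (c n) s) /\
      (forall N, sum_f_R0 (fun n => mcyl Q p (c n)) N <= eps).

Inductive measurable : set -> Prop :=
  | meas_cyl : forall a, measurable (cyl a)
  | meas_compl : forall A, measurable A -> measurable (fun s => ~ A s)
  | meas_union : forall F : nat -> set, (forall n, measurable (F n)) ->
      measurable (fun s => exists n, F n s)
  | meas_ext : forall A B, measurable A -> (forall s, A s <-> B s) -> measurable B.

Definition ergodic (Q : bool -> bool -> R) (p : bool -> R) : Prop :=
  forall A, measurable A -> (forall s, A s <-> A (shift s)) ->
    null Q p A \/ null Q p (fun s => ~ A s).

Definition lex_lt (r s : seqb) : Prop :=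
  exists k, (forall i, (i < k)%nat -> r i = s i) /\ (bv (r k) < bv (s k))%nat.
Definition lex_le (r s : seqb) : Prop := lex_lt r s \/ r = s.

Definition rv_measurable (X : seqb -> R) : Prop :=
  forall c, measurable (fun s => X s <= c).

Definition lexicographic_like (Q : bool -> bool -> R) (p : bool -> R)
    (X : seqb -> R) : Prop :=
  (exists N : set, null Q p N /\
     forall s t, ~ N s -> ~ N t -> X s = X t -> s = t) /\
  (forall s j n, X (shiftn j s) <= X (shiftn n s) <-> lex_le (shiftn j s) (shiftn n s)).

Definition is_perm (d : nat) (r : nat -> nat) : Prop :=
  (forall l, (l <= d)%nat -> (r l <= d)%nat) /\
  (forall l l', (l <= d)%nat -> (l' <= d)%nat -> r l = r l' -> l = l').

Definition has_pattern (d : nat) (x : nat -> R) (r : nat -> nat) : Prop :=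
  forall l, (1 <= l <= d)%nat ->
    x (r (l - 1)%nat) >= x (r l) /\
    (x (r (l - 1)%nat) = x (r l) -> (r (l - 1)%nat > r l)%nat).

(* P_pi: (X(sigma^d s), ..., X(sigma s), X(s)) has pattern r, i.e. x_i = X(sigma^(d-i) s) *)
Definition P_pat (X : seqb -> R) (d : nat) (r : nat -> nat) : set :=
  fun s => has_pattern d (fun i => X (shiftn (d - i) s)) r.

Definition Oset : set := fun s => exists n, forall k, shiftn n s k = false.

Definition in_tilde_partition (X : seqb -> R) (d : nat) (A : set) : Prop :=
  (forall s, A s <-> Oset s) \/
  (exists r, is_perm d r /\ forall s, A s <-> (P_pat X d r s /\ ~ Oset s)).

(* Main.v *)
Require Import Defs.
From Stdlib Require Import Reals List Lia Lra Classical FunctionalExtensionality.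
From Stdlib Require Import FinFun.
Import ListNotations.
Open Scope R_scope.

Lemma perm_surj d r : is_perm d r -> forall a, (a <= d)%nat -> exists l, (l <= d)%nat /\ r l = a.
Proof.
  intros [Hb Hi] a Ha.
  assert (Hincl : incl (seq 0 (S d)) (map r (seq 0 (S d)))).
  { apply NoDup_length_incl.
    - apply Injective_map_NoDup_in; [|apply seq_NoDup].
      intros x y Hx Hy E. apply in_seq in Hx; apply in_seq in Hy. apply Hi; lia.
    - rewrite length_map; lia.
    - intros x Hx. apply in_map_iff in Hx. destruct Hx as [y [<- Hy]].
      apply in_seq in Hy. apply in_seq. specialize (Hb y). lia. }
  assert (In a (seq 0 (S d))) by (apply in_seq; lia).
  apply Hincl in H. apply in_map_iff in H. destruct H as [l [E Hl]].
  apply in_seq in Hl. exists l; split; [lia|auto].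
Qed.

Definition Tx (x : nat -> R) (a b : nat) : Prop := x a > x b \/ (x a = x b /\ (a > b)%nat).

Lemma Tx_trans x a b c : Tx x a b -> Tx x b c -> Tx x a c.
Proof. unfold Tx; intros [H|[H H']] [G|[G G']]; try (left; lra); right; split; [lra|lia]. Qed.

Lemma Tx_asym x a b : Tx x a b -> Tx x b a -> False.
Proof. unfold Tx; intros [H|[H H']] [G|[G G']]; try lra; lia. Qed.

Lemma pat_chain d x r : has_pattern d x r ->
  forall l k, (l + S k <= d)%nat -> Tx x (r l) (r (l + S k)%nat).
Proof.
  intros Hp l k; induction k; intros Hk.
  - specialize (Hp (l+1)%nat ltac:(lia)). replace (l + 1 - 1)%nat with l in Hp by lia.
    destruct Hp as [H1 H2]. unfold Tx. destruct (Rge_gt_or_eq_dec _ _ H1) as [H|H]; [left|right]; auto.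
  - eapply Tx_trans. apply IHk; lia.
    specialize (Hp (l + S (S k))%nat ltac:(lia)). replace (l + S (S k) - 1)%nat with (l + S k)%nat in Hp by lia.
    destruct Hp as [H1 H2]. unfold Tx. destruct (Rge_gt_or_eq_dec _ _ H1) as [H|H]; [left|right]; auto.
Qed.

Lemma pat_unique d x x' r : is_perm d r -> has_pattern d x r -> has_pattern d x' r ->
  forall a b, (a <= d)%nat -> (b <= d)%nat -> (a > b)%nat -> x a >= x b -> x' a >= x' b.
Proof.
  intros Hr Hx Hx' a b Ha Hb Hab Hge.
  destruct (perm_surj d r Hr a Ha) as [la [Hla Ea]].
  destruct (perm_surj d r Hr b Hb) as [lb [Hlb Eb]].
  assert (T : Tx x a b) by (unfold Tx; destruct (Rge_gt_or_eq_dec _ _ Hge); auto).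
  destruct (Nat.lt_trichotomy la lb) as [L|[L|L]].
  - pose proof (pat_chain d x' r Hx' la (lb - la - 1)) as C.
    replace (la + S (lb - la - 1))%nat with lb in C by lia.
    rewrite Ea, Eb in C. destruct (C ltac:(lia)) as [H|[H _]]; lra.
  - subst. lia.
  - pose proof (pat_chain d x r Hx lb (la - lb - 1)) as C.
    replace (lb + S (la - lb - 1))%nat with la in C by lia.
    rewrite Ea, Eb in C. exfalso; eapply Tx_asym; [exact T| apply C; lia].
Qed.

Lemma lex_lt_cons u v : lex_lt u v <-> ((bv (u 0%nat) < bv (v 0%nat))%nat \/ (u 0%nat = v 0%nat /\ lex_lt (shift u) (shift v))).
Proof.
  split.
  - intros [k [Hp Hk]]. destruct k as [|k].
    + left; auto.
    + right. split. apply Hp; lia. exists k. split; [intros i Hi; apply Hp; lia | exact Hk].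
  - intros [H|[H [k [Hp Hk]]]].
    + exists 0%nat. split; [intros; lia | auto].
    + exists (S k). split; [|exact Hk]. intros [|i] Hi; [auto| apply Hp; lia].
Qed.

Lemma eq_cons u v : u = v <-> (u 0%nat = v 0%nat /\ shift u = shift v).
Proof.
  split. intros ->; auto.
  intros [H1 H2]. extensionality k. destruct k; auto.
  change (shift u k = shift v k). rewrite H2; auto.
Qed.

Lemma lex_le_cons u v : lex_le u v <-> ((bv (u 0%nat) < bv (v 0%nat))%nat \/ (u 0%nat = v 0%nat /\ lex_le (shift u) (shift v))).
Proof.
  unfold lex_le. rewrite lex_lt_cons, eq_cons. tauto.
Qed.

Lemma first_occ (f : nat -> bool) b n : f n = b -> exists m, f m = b /\ forall i, (i < m)%nat -> f i <> b.
Proof.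
  revert f; induction n; intros f Hf.
  - exists 0%nat; split; auto; intros; lia.
  - destruct (Bool.bool_dec (f 0%nat) b) as [E|E].
    + exists 0%nat; split; auto; intros; lia.
    + destruct (IHn (fun i => f (S i)) Hf) as [m [Hm Hi]].
      exists (S m); split; auto. intros [|i] Hlt; auto. apply Hi; lia.
Qed.

Lemma zero_run n : forall u, (forall i, (i <= n)%nat -> u i = false) -> u (S n) = true -> ~ lex_le (shift u) u.
Proof.
  induction n; intros u Hz Ht; rewrite lex_le_cons; change (shift u 0%nat) with (u 1%nat);
    rewrite (Hz 0%nat ltac:(lia)); simpl.
  - rewrite Ht; simpl. intros [H|[H _]]; [lia|discriminate].
  - rewrite (Hz 1%nat ltac:(lia)); simpl. intros [H|[_ H]]; [lia|].
    apply (IHn (shift u)); auto. intros i Hi; apply Hz; lia.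
Qed.

Lemma one_run n : forall u, (forall i, (i <= n)%nat -> u i = true) -> u (S n) = false -> lex_le (shift u) u.
Proof.
  induction n; intros u Hz Ht; rewrite lex_le_cons; change (shift u 0%nat) with (u 1%nat);
    rewrite (Hz 0%nat ltac:(lia)); simpl.
  - rewrite Ht; simpl. left; lia.
  - rewrite (Hz 1%nat ltac:(lia)); simpl. right; split; auto.
    apply (IHn (shift u)); auto. intros i Hi; apply Hz; lia.
Qed.

Lemma first_sym u : ~ Oset u -> (u 0%nat = true <-> lex_le (shift u) u).
Proof.
  intros HO. destruct (u 0%nat) eqn:E.
  - split; auto; intros _.
    destruct (classic (exists i, u i = false)) as [[i Hi]|Hn].
    + destruct (first_occ u false i Hi) as [m [Hm Hlt]].
      destruct m as [|n]; [congruence|].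
      apply (one_run n); auto. intros j Hj. specialize (Hlt j ltac:(lia)).
      destruct (u j); auto; congruence.
    + right. extensionality k. unfold shift.
      destruct (u (S k)) eqn:E1; [|exfalso; apply Hn; eauto].
      destruct (u k) eqn:E2; auto; exfalso; apply Hn; eauto.
  - split; [discriminate|]. intros Hle.
    destruct (classic (exists i, u i = true)) as [[i Hi]|Hn].
    + destruct (first_occ u true i Hi) as [m [Hm Hlt]].
      destruct m as [|n]; [congruence|].
      exfalso; apply (zero_run n u); auto. intros j Hj. specialize (Hlt j ltac:(lia)).
      destruct (u j); auto; congruence.
    + exfalso. apply HO. exists 0%nat. intros k. simpl. unfold shiftn; simpl.
      destruct (u k) eqn:E1; auto. exfalso; apply Hn; eauto.
Qed.

Definition Hc (s : seqb) (i j : nat) : Prop := lex_le (shiftn j s) (shiftn i s).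

Lemma shift_shiftn n s : shift (shiftn n s) = shiftn (S n) s.
Proof. extensionality k. unfold shift, shiftn. f_equal. lia. Qed.

Lemma shiftn0 s : shiftn 0 s = s.
Proof. extensionality k. reflexivity. Qed.

Lemma notO_shiftn t j : ~ Oset t -> ~ Oset (shiftn j t).
Proof.
  intros HO [n Hn]. apply HO. exists (j + n)%nat. intros k. specialize (Hn k).
  unfold shiftn in *. rewrite <- Nat.add_assoc. auto.
Qed.

Lemma O_shift s : Oset s -> Oset (shift s).
Proof.
  intros [n Hn]. exists n. intros k. specialize (Hn (S k)). unfold shiftn, shift in *.
  rewrite Nat.add_succ_r in Hn. auto.
Qed.

Lemma Hc_sym_bit t j : ~ Oset t -> (t j = true <-> Hc t j (S j)).
Proof.
  intros HO. unfold Hc. rewrite <- shift_shiftn.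
  rewrite <- (first_sym (shiftn j t) (notO_shiftn t j HO)).
  unfold shiftn. rewrite Nat.add_0_r. tauto.
Qed.

Lemma Hc_zero s j : Hc s 0 (S j) <-> ((bv (shift s j) < bv (s 0%nat))%nat \/ (shift s j = s 0%nat /\ Hc (shift s) 0 (S j))).
Proof.
  unfold Hc. rewrite lex_le_cons. rewrite shift_shiftn, !shiftn0.
  unfold shiftn at 1 2. rewrite Nat.add_0_r. simpl. reflexivity.
Qed.

Lemma H_transfer d s s' : s 0%nat = s' 0%nat -> ~ Oset (shift s) -> ~ Oset (shift s') ->
  (forall i j, (i < j)%nat -> (j <= d)%nat -> (Hc (shift s) i j <-> Hc (shift s') i j)) ->
  forall i j, (i < j)%nat -> (j <= d)%nat -> Hc s i j -> Hc s' i j.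
Proof.
  intros E0 HO HO' HH i j Hij Hj.
  destruct j as [|j]; [lia|].
  destruct i as [|i].
  - assert (Eb : shift s j = shift s' j).
    { pose proof (Hc_sym_bit _ j HO) as A. pose proof (Hc_sym_bit _ j HO') as B.
      pose proof (HH j (S j) ltac:(lia) Hj) as C.
      destruct (shift s j), (shift s' j); auto; exfalso; [apply Bool.diff_false_true, (proj2 B), (proj1 C), (proj1 A) | apply Bool.diff_false_true, (proj2 A), (proj2 C), (proj1 B)]; reflexivity. }
    rewrite (Hc_zero s j), (Hc_zero s' j). rewrite <- Eb, <- E0. rewrite (HH 0%nat (S j) ltac:(lia) Hj). auto.
  - intros H. change (Hc (shift s') i j). change (Hc (shift s) i j) in H.
    apply HH; auto; lia.
Qed.

Lemma pat_Hc (X : seqb -> R) d r s s' :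
  (forall s j n, X (shiftn j s) <= X (shiftn n s) <-> lex_le (shiftn j s) (shiftn n s)) ->
  is_perm d r -> P_pat X d r s -> P_pat X d r s' ->
  forall i j, (i < j)%nat -> (j <= d)%nat -> Hc s i j -> Hc s' i j.
Proof.
  intros L Hr P P' i j Hij Hj H. unfold Hc in *. apply L. apply L in H.
  pose proof (pat_unique d _ _ r Hr P P' (d - i) (d - j) ltac:(lia) ltac:(lia) ltac:(lia)) as U.
  simpl in U. replace (d - (d - i))%nat with i in U by lia.
  replace (d - (d - j))%nat with j in U by lia. apply Rge_le, U, Rle_ge, H.
Qed.

Lemma pat_transfer (X : seqb -> R) d r s s' :
  (forall s j n, X (shiftn j s) <= X (shiftn n s) <-> lex_le (shiftn j s) (shiftn n s)) ->
  is_perm d r -> P_pat X d r s ->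
  (forall i j, (i < j)%nat -> (j <= d)%nat -> (Hc s i j <-> Hc s' i j)) ->
  P_pat X d r s'.
Proof.
  intros L [Hb Hi] P HH l Hl. specialize (P l Hl).
  set (a := r (l - 1)%nat) in *. set (b := r l) in *.
  assert (Ha : (a <= d)%nat) by (apply Hb; lia).
  assert (Hbb : (b <= d)%nat) by (apply Hb; lia).
  assert (Hab : a <> b) by (intro E; apply Hi in E; lia).
  destruct P as [P1 P2].
  destruct (Nat.lt_gt_cases a b) as [[Hlt|Hgt] _]; [exact Hab| |].
  -
    assert (Hs : X (shiftn (d - a) s) > X (shiftn (d - b) s)).
    { destruct (Rge_gt_or_eq_dec _ _ P1) as [G|G]; auto. specialize (P2 G). lia. }
    assert (Hs' : X (shiftn (d - a) s') > X (shiftn (d - b) s')).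
    { apply Rnot_le_gt. intro G. apply L in G.
      assert (G2 : Hc s' (d - b) (d - a)) by exact G.
      apply HH in G2; [|lia|lia]. unfold Hc in G2. apply L in G2. lra. }
    split; [lra| intros E; lra].
  - split; [|intros; lia].
    assert (G : Hc s (d - a) (d - b)).
    { unfold Hc. apply L. lra. }
    apply HH in G; [|lia|lia]. unfold Hc in G. apply L in G. lra.
Qed.

Lemma null_mono Q p (A B : set) : null Q p A -> (forall s, B s -> A s) -> null Q p B.
Proof.
  intros HA HB eps He. destruct (HA eps He) as [c [H1 H2]]. exists c. split; auto.
Qed.

Lemma null_empty Q p (B : set) : ergodic Q p -> (forall s, ~ B s) -> null Q p B.
Proof.
  intros Herg HB.
  assert (M : measurable (fun _ => True)).
  { apply (meas_ext (cyl [])). apply meas_cyl. intros s; split; auto. intros _ i Hi. simpl in Hi. lia. }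
  destruct (Herg _ M (fun s => conj (fun x => x) (fun x => x))) as [N|N];
    eapply null_mono; eauto; intros s Hs; exfalso; eapply HB; eauto.
Qed.

Theorem lemma8 (Q : bool -> bool -> R) (p : bool -> R) (X : seqb -> R) (d : nat)
  (a0 : bool) (Pi Pj : set) :
  markov_params Q p -> ergodic Q p ->
  rv_measurable X -> lexicographic_like Q p X ->
  (1 <= d)%nat ->
  in_tilde_partition X d Pi -> in_tilde_partition X d Pj ->
  (forall s, Pi s -> cyl [a0] s) ->
  (forall s, (Pi s /\ Pj (shift s)) <-> (cyl [a0] s /\ Pj (shift s))) \/
  null Q p (fun s => Pi s /\ Pj (shift s)).
Proof.
  intros _ Herg _ [_ L] _ HPi HPj Hsub.
  destruct HPi as [HO|[r [Hr HPi]]].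
  - exfalso.
    assert (A1 : cyl [a0] (fun _ => false)).
    { apply Hsub, HO. exists 0%nat. reflexivity. }
    assert (A2 : cyl [a0] (fun k => match k with 0%nat => true | _ => false end)).
    { apply Hsub, HO. exists 1%nat. reflexivity. }
    specialize (A1 0%nat ltac:(simpl; lia)). specialize (A2 0%nat ltac:(simpl; lia)).
    simpl in A1, A2. congruence.
  - destruct HPj as [HO|[r' [Hr' HPj]]].
    + right. apply null_empty; auto. intros s [H1 H2].
      apply HPi in H1. apply HO in H2. destruct H1 as [_ H1].
      apply H1. destruct H2 as [n Hn]. exists (S n). intros k. apply Hn.
    + destruct (classic (exists s0, Pi s0 /\ Pj (shift s0))) as [[s0 [A0 B0]]|Hne].
      * left. intros s. split.
        { intros [H1 H2]; split; auto. }
        intros [H1 H2]. split; auto.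
        pose proof (Hsub s0 A0) as C0.
        apply HPi in A0. apply HPj in B0. apply HPj in H2 as H2'. apply HPi.
        destruct A0 as [A0 A0O]. destruct B0 as [B0 B0O]. destruct H2' as [H2p H2O].
        split.
        -- apply (pat_transfer X d r s0 s L Hr A0).
           assert (Ht : forall i j, (i < j)%nat -> (j <= d)%nat ->
                     (Hc (shift s0) i j <-> Hc (shift s) i j)).
           { intros i j Hij Hj; split; eapply pat_Hc; eauto. }
           assert (E0 : s0 0%nat = s 0%nat).
           { specialize (C0 0%nat ltac:(simpl; lia)). specialize (H1 0%nat ltac:(simpl; lia)).
             simpl in *. congruence. }
           intros i j Hij Hj; split; eapply H_transfer; eauto.
           intros i' j' Hi' Hj'. symmetry; auto.
        -- intro HOs. apply H2O, O_shift, HOs.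
      * right. apply null_empty; auto. intros s Hs. apply Hne. eauto.
Qed.
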